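(* Let $n\ge2$, let $P$ be a partial $n$-Metric on a set $X$, and let $\{x_i\}_{i\in\mathbb{N}}$ be a Cauchy sequence in $X$ with special limit $a\in X$. Then for every integer $0\le q\le n-1$, all $b_1,\dots,b_q\in X$ and every $\epsilon>0$ there exists $N\in\mathbb{N}$ such that for all $i_1,\dots,i_{n-q}>N$, $$P(\langle a\rangle^{n-q},b_1,\dots,b_q)-\epsilon<P(x_{i_1},\dots,x_{i_{n-q}},b_1,\dots,b_q)<P(\langle a\rangle^{n-q},b_1,\dots,b_q)+\epsilon.$$
   Context: Notation: $\langle a\rangle^k$ denotes the $k$-tuple $(a,\dots,a)$ inserted into an argument list. A partial $n$-Metric on $X$ is a function $P:X^n\to\mathbb{R}$ such that for all $x_1,\dots,x_n,a\in X$: (1) $P(\langle x_1\rangle^n)\le P(\langle x_1\rangle^{n-1},x_2)$; (2) $P$ is invariant under permutations of its arguments; (3) $P(\langle x_1\rangle^{n-1},x_2)=P(\langle x_1\rangle^n)$ and $P(\langle x_2\rangle^{n-1},x_1)=P(\langle x_2\rangle^n)$ iff $x_1=x_2$; (4) $P(x_1,\dots,x_n)\le P(x_1,\dots,x_{n-1},a)+P(\langle a\rangle^{n-1},x_n)-P(\langle a\rangle^n)$. A point $a$ is a limit of $\{x_i\}$ iff for every $\epsilon>0$ there is $N$ with $P(\langle a\rangle^{n-1},x_i)-P(\langle a\rangle^n)<\epsilon$ for all $i>N$ (convergence in the topology generated by the balls $\{y\mid P(\langle x\rangle^{n-1},y)-P(\langle x\rangle^n)<\epsilon\}$). $\{x_i\}$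 is Cauchy with central distance $r\in\mathbb{R}$ if for every $\epsilon>0$ there is $N$ such that $|P(x_{i_1},\dots,x_{i_n})-r|<\epsilon$ for all $i_1,\dots,i_n>N$. A special limit of such a sequence is a limit $a$ with $P(\langle a\rangle^n)=r$. *)

(* Defs.v *)
From HB Require Import structures.
From mathcomp Require Import all_boot all_order all_algebra.
From mathcomp Require Import fingroup perm.
From mathcomp Require Import reals.
Set Implicit Arguments. Unset Strict Implicit. Unset Printing Implicit Defensive.
Import Order.TTheory GRing.Theory Num.Theory.
Local Open Scope ring_scope.

Definition cat_args (X : Type) (n k : nat) (f g : nat -> X) : 'I_n -> X :=
  fun i => if (val i < k)%N then f (val i) else g (val i - k)%N.

Definition cst (X : Type) (x : X) : nat -> X := fun _ => x.

Definition rep (X : Type) (n : nat) (x : X) : 'I_n -> X := fun _ => x.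

Arguments cat_args {X} n k f g.
Arguments rep {X} n x.
Arguments cst {X} x _.

Section PM.
Variables (R : realType) (X : Type) (n : nat).

Definition partial_nmetric (P : ('I_n -> X) -> R) : Prop :=
  [/\
      (forall x1 x2 : X, P (rep n x1) <= P (cat_args n n.-1 (cst x1) (cst x2))),
      (forall (s : {perm 'I_n}) (f : 'I_n -> X), P (fun i => f (s i)) = P f),
      (forall x1 x2 : X,
        (P (cat_args n n.-1 (cst x1) (cst x2)) = P (rep n x1) /\
         P (cat_args n n.-1 (cst x2) (cst x1)) = P (rep n x2)) <-> x1 = x2) &
      (forall (xs : nat -> X) (a : X),
        P (fun i => xs (val i)) <=
        P (cat_args n n.-1 xs (cst a))
        + P (cat_args n n.-1 (cst a) (cst (xs n.-1))) - P (rep n a))].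

Definition is_limit (P : ('I_n -> X) -> R) (x : nat -> X) (a : X) : Prop :=
  forall eps : R, 0 < eps -> exists N : nat, forall i : nat, (N < i)%N ->
    P (cat_args n n.-1 (cst a) (cst (x i))) - P (rep n a) < eps.

Definition cauchy_central (P : ('I_n -> X) -> R) (x : nat -> X) (r : R) : Prop :=
  forall eps : R, 0 < eps -> exists N : nat, forall I : 'I_n -> nat,
    (forall j, (N < I j)%N) -> `|P (fun j => x (I j)) - r| < eps.

Definition special_limit (P : ('I_n -> X) -> R) (x : nat -> X) (r : R) (a : X) : Prop :=
  is_limit P x a /\ P (rep n a) = r.

End PM.

(* Main.v *)
Require Import Defs.
From HB Require Import structures.
From mathcomp Require Import all_boot all_order all_algebra.
From mathcomp Require Import fingroup perm.
From mathcomp Require Import reals.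
From mathcomp Require Import ring lra zify.
From Stdlib Require Import FunctionalExtensionality.
Import Order.TTheory GRing.Theory Num.Theory.
Local Open Scope ring_scope.

Definition setf (X : Type) (n : nat) (f : 'I_n -> X) (k : 'I_n) (v : X) : 'I_n -> X :=
  fun i => if i == k then v else f i.

Arguments setf {X n}.

Definition DD (R : realType) (X : Type) (n : nat) (P : ('I_n -> X) -> R) (z y : X) : R :=
  P (cat_args n n.-1 (cst z) (cst y)) - P (rep n z).

Arguments DD {R X n}.

Lemma repl (R : realType) (X : Type) (n : nat) (P : ('I_n -> X) -> R)
  (Hn : (0 < n)%N)
  (Hperm : forall (s : {perm 'I_n}) (f : 'I_n -> X), P (fun i => f (s i)) = P f)
  (H4 : forall (xs : nat -> X) (a : X),
        P (fun i => xs (val i)) <=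
        P (cat_args n n.-1 xs (cst a))
        + P (cat_args n n.-1 (cst a) (cst (xs n.-1))) - P (rep n a))
  (f : 'I_n -> X) (k : 'I_n) (y z : X) :
  P (setf f k y) <= P (setf f k z) + DD P z y.
Proof.
have Hmx : (n.-1 < n)%N by rewrite ltn_predL.
pose mx : 'I_n := Ordinal Hmx.
pose s := tperm k mx.
pose g := fun i => setf f k y (s i).
pose xs := fun j : nat => g (insubd mx j).
have smx : s mx = k by rewrite /s tpermR.
have sne : forall i, i != mx -> s i != k.
  move=> i Hi; apply/eqP => E; move: Hi; rewrite -smx in E.
  by rewrite (perm_inj E) eqxx.
have := H4 xs z.
have -> : (fun i : 'I_n => xs (val i)) = g.
  by apply: functional_extensionality => i; rewrite /xs valKd.
have -> : P g = P (setf f k y) by rewrite /g Hperm.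
have -> : cat_args n n.-1 xs (cst z) = (fun i => setf f k z (s i)).
  apply: functional_extensionality => i; rewrite /cat_args /xs valKd /g /setf.
  case: ifP => Hi.
    have Hne : i != mx by apply/eqP => E; move: Hi; rewrite E /= ltnn.
    by rewrite (negbTE (sne _ Hne)).
  have -> : i = mx.
    apply: val_inj => /=; move: (ltn_ord i) Hi; case: n {Hn Hperm H4 f k s g xs smx sne Hmx mx P} i => //= n' i; lia.
  by rewrite smx eqxx.
rewrite Hperm.
have -> : xs n.-1 = y.
  rewrite /xs.
  have -> : insubd mx n.-1 = mx by apply: val_inj; rewrite val_insubd Hmx.
  by rewrite /g /setf smx eqxx.
by rewrite /DD; lra.
Qed.

Lemma gen (R : realType) (X : Type) (n : nat) (P : ('I_n -> X) -> R)
  (Hn : (0 < n)%N)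
  (Hperm : forall (s : {perm 'I_n}) (f : 'I_n -> X), P (fun i => f (s i)) = P f)
  (H4 : forall (xs : nat -> X) (a : X),
        P (fun i => xs (val i)) <=
        P (cat_args n n.-1 xs (cst a))
        + P (cat_args n n.-1 (cst a) (cst (xs n.-1))) - P (rep n a))
  (m : nat) (Hm : (m <= n)%N) (h h' b : nat -> X) (c : R) :
  (forall j, (j < m)%N -> DD P (h' j) (h j) <= c) ->
  P (cat_args n m h b) <= P (cat_args n m h' b) + m%:R * c.
Proof.
move=> Hc.
pose mix t := fun j : nat => if (j < t)%N then h' j else h j.
suff H : forall t, (t <= m)%N -> P (cat_args n m h b) <= P (cat_args n m (mix t) b) + t%:R * c.
  have := H m (leqnn m).
  have -> // : cat_args n m (mix m) b = cat_args n m h' b.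
  apply: functional_extensionality => i; rewrite /cat_args /mix.
  by case: (val i < m)%N.
move=> t; elim: t => [|t IH] Ht.
  have -> : cat_args n m (mix 0%N) b = cat_args n m h b by [].
  by rewrite mulr0n mul0r addr0.
have Htm : (t < m)%N by [].
have Htn : (t < n)%N by apply: leq_trans Htm Hm.
pose k : 'I_n := Ordinal Htn.
pose f := cat_args n m (mix t.+1) b.
have E1 : cat_args n m (mix t) b = setf f k (h t).
  apply: functional_extensionality => i; rewrite /setf /f /cat_args /mix.
  case: (eqVneq i k) => [->|Hik] /=; first by rewrite Htm ltnn.
  case: ifP => // _.
  have Hi : val i != t by apply: contra Hik => /eqP E; apply/eqP/val_inj.
  have Hi2 : (val i < t.+1)%N = (val i < t)%N by rewrite ltnS leq_eqVlt (negbTE Hi).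
  by rewrite Hi2.
have E2 : f = setf f k (h' t).
  apply: functional_extensionality => i; rewrite /setf /f /cat_args /mix.
  case: (eqVneq i k) => [->|Hik] //=.
  by rewrite Htm ltnSn.
change (P (cat_args n m h b) <= P f + t.+1%:R * c).
have := IH (ltnW Ht).
rewrite E1.
have := @repl _ _ _ P Hn Hperm H4 f k (h t) (h' t).
rewrite -E2.
have := Hc t Htm.
rewrite -addn1 natrD mulrDl mul1r.
lra.
Qed.

Theorem theorem4p16 (R : realType) (X : Type) (n : nat) (P : ('I_n -> X) -> R)
    (x : nat -> X) (r : R) (a : X) :
  (2 <= n)%N -> partial_nmetric P ->
  cauchy_central P x r -> special_limit P x r a ->
  forall (q : nat) (b : nat -> X) (eps : R), (q <= n.-1)%N -> 0 < eps ->
  exists N : nat, forall I : nat -> nat,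
    (forall j, (j < n - q)%N -> (N < I j)%N) ->
    P (cat_args n (n - q) (cst a) b) - eps <
      P (cat_args n (n - q) (fun j => x (I j)) b) /\
    P (cat_args n (n - q) (fun j => x (I j)) b) <
      P (cat_args n (n - q) (cst a) b) + eps.
Proof.
move=> Hn2 [_ Hperm _ H4] Hc [Hlim Har] q b eps Hq Heps.
have Hn : (0 < n)%N by apply: leq_trans Hn2.
set m := (n - q)%N.
have Hmn : (m <= n)%N by rewrite /m leq_subr.
have Hnn : 0 < (n * n)%:R :> R by rewrite ltr0n muln_gt0 Hn.
pose d := eps / (2 * (n * n)%:R).
have Hd : 0 < d by rewrite /d divr_gt0 // mulr_gt0.
have Hnd : (n * n)%:R * d = eps / 2.
  by rewrite /d; field; rewrite pnatr_eq0 -lt0n.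
have [N1 HN1] := Hlim d Hd.
have [N2 HN2] := Hc d Hd.
exists (maxn N1 N2) => I HI.
have Dax : forall i, (maxn N1 N2 < i)%N -> DD P a (x i) <= d.
  move=> i Hi; apply: ltW; apply: HN1.
  by apply: leq_ltn_trans Hi; rewrite leq_maxl.
have Dxa : forall i, (maxn N1 N2 < i)%N -> DD P (x i) a <= n%:R * d.
  move=> i Hi.
  have H1 := @gen _ _ _ P Hn Hperm H4 n.-1 (leq_pred n) (cst (x i)) (cst a) (cst a) d
    (fun j _ => Dax i Hi).
  have E : cat_args n n.-1 (cst a) (cst a) = rep n a.
    by apply: functional_extensionality => j; rewrite /cat_args; case: ifP.
  rewrite E Har in H1.
  have H2 : `|P (fun j : 'I_n => x i) - r| < d.
    apply: (HN2 (fun _ => i)) => _.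
    by apply: leq_ltn_trans Hi; rewrite leq_maxr.
  rewrite ltr_distl in H2; case/andP: H2 => H2 _.
  have En : n%:R = (n.-1)%:R + 1 :> R by rewrite natr1 prednK.
  rewrite /DD En; rewrite /rep in H2 *; lra.
have Hup := @gen _ _ _ P Hn Hperm H4 m Hmn (fun j => x (I j)) (cst a) b d
  (fun j Hj => Dax _ (HI j Hj)).
have Hlo := @gen _ _ _ P Hn Hperm H4 m Hmn (cst a) (fun j => x (I j)) b (n%:R * d)
  (fun j Hj => Dxa _ (HI j Hj)).
have Hmle : (m%:R : R) <= (n * n)%:R.
  rewrite ler_nat; apply: leq_trans Hmn _; by rewrite leq_pmulr.
have B1 : m%:R * d <= eps / 2.
  by rewrite -Hnd; apply: ler_wpM2r => //; exact: ltW.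
have B2 : m%:R * (n%:R * d) <= eps / 2.
  rewrite -Hnd mulrA -natrM; apply: ler_wpM2r; first exact: ltW.
  by rewrite ler_nat leq_mul2r Hmn orbT.
split; lra.
Qed.
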